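(* Let $G$ be a connected graph with vertex set $V$, and let $V'$ be the set of new vertices (one for each edge of $G$) so that both the subdivision $S(G)$ and the triangulation $T(G)$ have vertex set $V\cup V'$ (the new vertex associated with the edge $kl$ being the same in both graphs). Denote by $\Omega^S_{ij}$ and $\Omega^T_{ij}$ the resistance distances between $i$ and $j$ in $S(G)$ and $T(G)$ respectively. Then: (1) for $i,j\in V$, $\Omega^T_{ij}=\frac{1}{3}\Omega^S_{ij}$; (2) for $i\in V'$ and $j\in V$, $\Omega^T_{ij}=\frac{1}{3}\Omega^S_{ij}+\frac{1}{3}$; (3) for distinct $i,j\in V'$, $\Omega^T_{ij}=\frac{1}{3}\Omega^S_{ij}+\frac{2}{3}$.
   Context: All graphs are finite, undirected, without loops or multiple edges. For a connected graph $H$ and vertices $i,j$, the resistance distance between $i$ and $j$ is the effective resistance between them in the electrical network obtained from $H$ by replacing each edge by a unit resistor. The subdivision $S(G)$ is obtained from $G$ by replacing each edge $kl$ by a path $k\,w\,l$ through a new vertex $w$. The triangulation $T(G)$ is obtained from $G$ by adding, for each edge $kl$, a new vertex $w$ adjacent to both $k$ and $l$ (keeping the edge $kl$), so each edge becomes a triangle. *)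

(* Defs.v *)
From HB Require Import structures.
From mathcomp Require Import all_boot all_order all_algebra.
Set Implicit Arguments. Unset Strict Implicit. Unset Printing Implicit Defensive.
Import Order.TTheory GRing.Theory Num.Theory.
Local Open Scope ring_scope.

(* A simple graph on a finite vertex type T is a symmetric irreflexive
   relation e : rel T.  Edges of G are the 2-element vertex sets {k,l} with
   e k l. *)
Definition is_edge (T : finType) (e : rel T) (s : {set T}) : bool :=
  [exists k, exists l, e k l && (s == [set k; l])].

(* The type of edges of G; these are the new vertices V' of S(G) and T(G). *)
Definition edge (T : finType) (e : rel T) := {s : {set T} | is_edge e s}.
HB.instance Definition _ (T : finType) (e : rel T) := Finite.on (edge e).

Definition svert (T : finType) (e : rel T) := (T + edge e)%type.
HB.instance Definition _ (T : finType) (e : rel T) := Finite.on (svert e).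

Definition adjS (T : finType) (e : rel T) : rel (svert e) :=
  fun x y => match x, y with
  | inl k, inr w => k \in val w
  | inr w, inl k => k \in val w
  | _, _ => false
  end.

Definition adjT (T : finType) (e : rel T) : rel (svert e) :=
  fun x y => match x, y with
  | inl k, inl l => e k l
  | inl k, inr w => k \in val w
  | inr w, inl k => k \in val w
  | _, _ => false
  end.

Definition laplacian (R : fieldType) (V : finType) (adj : rel V) : 'M[R]_#|V| :=
  \matrix_(i, j) (if i == j then (#|[set y | adj (enum_val i) y]|)%:R
                  else - (adj (enum_val i) (enum_val j))%:R).

(* Resistance distance between a and b: inject a unit current at a and
   extract it at b, i.e. solve x L = e_a - e_b (solvable when the graph is
   connected; pinvmx gives a solution), and take the potential difference
   x_a - x_b = x (e_a - e_b)^T. *)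
Definition resistance (R : fieldType) (V : finType) (adj : rel V) (a b : V) : R :=
  let u : 'rV[R]_#|V| := delta_mx 0 (enum_rank a) - delta_mx 0 (enum_rank b) in
  (u *m pinvmx (laplacian R adj) *m u^T) 0 0.

Arguments adjS {T} e.
Arguments adjT {T} e.
Arguments laplacian R {V} adj.
Arguments resistance R {V} adj a b.

(* Main.v *)
Require Import Defs.
From HB Require Import structures.
From mathcomp Require Import all_boot all_order all_algebra.
Import Order.TTheory GRing.Theory Num.Theory.
Local Open Scope ring_scope.
From mathcomp Require Import ring lra.
Section Gen.
Variables (R : realFieldType) (V : finType) (adj : rel V).
Hypotheses (asym : symmetric adj) (airr : irreflexive adj).

Definition LapF (f : V -> R) (z : V) : R :=
  \sum_w (f z - f w) * (adj z w)%:R.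

Lemma sum_ord_V (F : 'I_#|V| -> R) :
  \sum_(i < #|V|) F i = \sum_(v : V) F (enum_rank v).
Proof. exact: (reindex enum_rank (onW_bij _ (@enum_rank_bij V))). Qed.

Lemma lapE (x : 'rV[R]_#|V|) (z : V) :
  (x *m laplacian R adj) 0 (enum_rank z) = LapF (fun w => x 0 (enum_rank w)) z.
Proof.
rewrite mxE sum_ord_V /LapF.
have -> : \sum_v x 0 (enum_rank v) * laplacian R adj (enum_rank v) (enum_rank z)
   = \sum_v (x 0 (enum_rank v) * ((v == z)%:R * (\sum_w (adj z w)%:R))
             - x 0 (enum_rank v) * (adj z v)%:R).
  apply: eq_bigr => v _; rewrite /laplacian mxE !enum_rankK.
  rewrite (inj_eq enum_rank_inj).
  have [->|nvz] := eqVneq v z.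
    rewrite airr mulr0 subr0 mul1r; congr (_ * _).
    rewrite -sum1dep_card natr_sum big_mkcond; apply: eq_bigr => w _.
    by case: (adj z w).
  by rewrite mul0r mulr0 sub0r mulrN asym.
rewrite sumrB.
have -> : \sum_v x 0 (enum_rank v) * ((v == z)%:R * (\sum_w (adj z w)%:R))
   = x 0 (enum_rank z) * (\sum_w (adj z w)%:R).
  rewrite (bigD1 z) //= eqxx mul1r [X in _ + X]big1 ?addr0 //.
  by move=> v Hv; rewrite (negbTE Hv) mul0r mulr0.
rewrite mulr_sumr -sumrB; apply: eq_bigr => w _.
by rewrite mulrBl.
Qed.

Lemma lap_tr : (laplacian R adj)^T = laplacian R adj.
Proof.
apply/matrixP => i j; rewrite !mxE.
have [->|nij] := eqVneq j i; first by [].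
by rewrite asym.
Qed.

Definition uvec (a b : V) : 'rV[R]_#|V| :=
  delta_mx 0 (enum_rank a) - delta_mx 0 (enum_rank b).

Lemma uvecE (a b : V) (z : 'rV[R]_#|V|) :
  (uvec a b *m z^T) 0 0 = z 0 (enum_rank a) - z 0 (enum_rank b).
Proof. by rewrite /uvec mulmxBl -!rowE !mxE. Qed.

Lemma resE (a b : V) (w : 'rV[R]_#|V|) :
  w *m laplacian R adj = uvec a b ->
  resistance R adj a b = (uvec a b *m w^T) 0 0.
Proof.
move=> hw; rewrite /resistance -/(uvec a b).
have sub : (uvec a b <= laplacian R adj)%MS by rewrite -hw submxMl.
rewrite -{2}hw trmx_mul lap_tr mulmxA (mulmxKpV sub) //.
Qed.

Lemma ker_const (conn : forall x y, connect adj x y) (r : 'rV[R]_#|V|) :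
  r *m laplacian R adj = 0 -> forall a b, r 0 (enum_rank a) = r 0 (enum_rank b).
Proof.
move=> hr a b; set f := fun w => r 0 (enum_rank w).
have H z : LapF f z = 0 by rewrite -lapE hr mxE.
have [m _ hm] := @Order.TotalTheory.arg_maxP _ R V a predT f isT.
have step x y : adj x y -> f x = f m -> f y = f m.
  move=> hxy hx.
  have nn : forall w, true -> 0 <= (f x - f w) * (adj x w)%:R.
    by move=> w _; rewrite hx mulr_ge0 ?ler0n // subr_ge0; apply: hm.
  have hz := psumr_eq0P nn (H x).
  by have := hz y isT; rewrite hxy mulr1 => /eqP; rewrite subr_eq0 => /eqP <-.
have cl : closed adj [pred w | f w == f m].
  move=> x y hxy; rewrite !inE; apply/eqP/eqP => h.
    exact: step hxy h.
  by apply: step h; rewrite asym.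
have ha := closed_connect cl (conn m a).
have hb := closed_connect cl (conn m b).
rewrite !inE eqxx in ha hb.
by rewrite -/(f a) -/(f b) (eqP (esym ha)) (eqP (esym hb)).
Qed.

Lemma uvec_sub (conn : forall x y, connect adj x y) (a b : V) :
  (uvec a b <= laplacian R adj)%MS.
Proof.
rewrite submxE; move: (cokermx _) (mulmx_coker (laplacian R adj)) => c hcL.
apply/eqP/rowP => j.
have hc : (row j c^T) *m laplacian R adj = 0.
  by rewrite -row_mul -lap_tr -trmx_mul hcL trmx0 row0.
have := ker_const conn _ hc a b; rewrite !mxE => hab.
have := uvecE a b (row j c^T); rewrite !mxE hab subrr => h; apply: etrans h.
by apply: eq_bigr => k _; rewrite !mxE.
Qed.
End Gen.
Arguments LapF {R V} adj f z.
Section Graph.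
Variables (R : realFieldType) (T : finType) (e : rel T).
Hypotheses (e_sym : symmetric e) (e_irr : irreflexive e).

Lemma adjS_sym : symmetric (adjS e).
Proof. by case=> [x|x] [y|y]. Qed.
Lemma adjS_irr : irreflexive (adjS e).
Proof. by case. Qed.
Lemma adjT_sym : symmetric (adjT e).
Proof. by case=> [x|x] [y|y] //=; rewrite e_sym. Qed.
Lemma adjT_irr : irreflexive (adjT e).
Proof. by case=> [x|x] //=; rewrite e_irr. Qed.

Lemma edgeP (w : edge e) : exists k l, [/\ e k l, k != l & val w = [set k; l]].
Proof.
have := valP w; rewrite /is_edge => /existsP [k /existsP [l /andP [hkl /eqP hw]]].
exists k, l; split => //; apply/negP => /eqP hk; by rewrite hk e_irr in hkl.
Qed.

Lemma card_edge (w : edge e) : #|val w| = 2%N.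
Proof. by have [k [l [_ hkl ->]]] := edgeP w; rewrite cards2 hkl. Qed.

Lemma edge_two {w : edge e} {v t} : v \in val w -> t \in val w -> t != v ->
  e v t /\ val w = [set v; t].
Proof.
have [k [l [hkl nkl ->]]] := edgeP w; rewrite !inE.
move=> /orP [] /eqP -> /orP [] /eqP ->; rewrite ?eqxx //.
- by rewrite e_sym; split => //; rewrite setUC.
Qed.

Definition mkE v t (h : e v t) : edge e.
Proof.
exists [set v; t]; apply/existsP; exists v; apply/existsP; exists t.
by rewrite h eqxx.
Defined.

Lemma sum_ind (A : {set T}) : \sum_t (t \in A)%:R = (#|A|%:R : R).
Proof. by rewrite -sum1_card natr_sum [RHS]big_mkcond; apply: eq_bigr => t _; case: (t \in A). Qed.

Lemma countC v t :
  \sum_(w : edge e | (v \in val w) && (t \in val w) && (t != v)) (1 : R) = (e v t)%:R.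
Proof.
have [->|ntv] := eqVneq t v.
  by rewrite e_irr big1 // => w; rewrite andbF.
case evt: (e v t).
  rewrite (big_pred1 (mkE v t evt)) // => w /=.
  rewrite /= andbT; apply/andP/eqP => [[hv ht]|->].
    by apply: val_inj => /=; have [] := edge_two hv ht ntv.
  by rewrite /= !inE !eqxx orbT.
rewrite big_pred0 // => w; rewrite /= andbT; apply/negP => /andP [hv ht].
by have [] := edge_two hv ht ntv; rewrite evt.
Qed.

Lemma lemK v (F : T -> R) :
  \sum_(w : edge e | v \in val w) \sum_(t | (t \in val w) && (t != v)) F t
  = \sum_t (e v t)%:R * F t.
Proof.
transitivity (\sum_(w : edge e) \sum_t
   ((v \in val w) && (t \in val w) && (t != v))%:R * F t).
  rewrite big_mkcond; apply: eq_bigr => w _; case: (v \in val w) => /=.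
    rewrite big_mkcond; apply: eq_bigr => t _.
    by case: ifP => _; rewrite ?mul1r ?mul0r.
  by rewrite big1 // => t _; rewrite mul0r.
rewrite exchange_big; apply: eq_bigr => t _.
rewrite -mulr_suml mulrC -countC [RHS]mulrC; congr (_ * _).
rewrite [RHS]big_mkcond; apply: eq_bigr => w _.
by case: ifP.
Qed.

Lemma LapF_sum (adj : rel (svert e)) (h : svert e -> R) z :
  LapF adj h z = \sum_t (h z - h (inl t)) * (adj z (inl t))%:R
               + \sum_w (h z - h (inr w)) * (adj z (inr w))%:R.
Proof. by rewrite /LapF big_sumType. Qed.

Variable f : svert e -> R.

Lemma LS_inr (w : edge e) :
  LapF (adjS e) f (inr w) = \sum_t (f (inr w) - f (inl t)) * (t \in val w)%:R.
Proof. by rewrite LapF_sum /= [X in _ + X]big1 ?addr0 // => w0 _; rewrite mulr0. Qed.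

Lemma LS_inl v :
  LapF (adjS e) f (inl v) = \sum_(w : edge e | v \in val w) (f (inl v) - f (inr w)).
Proof.
rewrite LapF_sum /= [X in X + _]big1 ?add0r => [|t _]; last by rewrite mulr0.
rewrite [RHS]big_mkcond; apply: eq_bigr => w _; by case: ifP; rewrite ?mulr1 ?mulr0.
Qed.

Lemma one_other (w : edge e) v : v \in val w ->
  \sum_(t | (t \in val w) && (t != v)) (1 : R) = 1.
Proof.
move=> hv.
have hc : #|val w :\ v| = 1%N.
  by have := cardsD1 v (val w); rewrite hv card_edge add1n => -[].
rewrite (eq_bigl (fun t => t \in val w :\ v)); last by move=> t; rewrite in_setD1 andbC.
by rewrite sumr_const hc.
Qed.

Lemma LS_inr2 (w : edge e) v : v \in val w ->
  LapF (adjS e) f (inr w) = 2 * f (inr w) - f (inl v)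
     - \sum_(t | (t \in val w) && (t != v)) f (inl t).
Proof.
move=> hv; rewrite LS_inr.
have -> : \sum_t (f (inr w) - f (inl t)) * (t \in val w)%:R
    = \sum_(t | t \in val w) (f (inr w) - f (inl t)).
  rewrite [RHS]big_mkcond; apply: eq_bigr => t _.
  by case: ifP; rewrite ?mulr1 ?mulr0.
rewrite (bigD1 v) //=.
have -> : \sum_(t | (t \in val w) && (t != v)) (f (inr w) - f (inl t))
   = f (inr w) * \sum_(t | (t \in val w) && (t != v)) 1
     - \sum_(t | (t \in val w) && (t != v)) f (inl t).
  by rewrite mulr_sumr -sumrB; apply: eq_bigr => t _; rewrite mulr1.
rewrite one_other // mulr1; ring.
Qed.


Definition gF (z : svert e) : R :=
  f z + (if z is inr _ then LapF (adjS e) f z else 0).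

Lemma ident z : LapF (adjT e) gF z = 3 * LapF (adjS e) f z.
Proof.
case: z => [v|w0].
  rewrite LapF_sum /= /gF /= LS_inl.
  set fv := f (inl v).
  set P := fun w : edge e => v \in val w.
  have hP1 : \sum_t (fv + 0 - (f (inl t) + 0)) * (e v t)%:R
      = fv * \sum_t (e v t)%:R - \sum_t (e v t)%:R * f (inl t).
    rewrite mulr_sumr -sumrB; apply: eq_bigr => t _; ring.
  have hP2 : \sum_w (fv + 0 - (f (inr w) + LapF (adjS e) f (inr w))) * (v \in sval w)%:R
      = \sum_(w | P w) (2 * fv * 1 - 3 * f (inr w)
           + \sum_(t | (t \in val w) && (t != v)) f (inl t)).
    rewrite [RHS]big_mkcond; apply: eq_bigr => w _; rewrite /P.
    case: ifP => hv; last by rewrite mulr0.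
    by rewrite /= (LS_inr2 w v hv) -/fv mulr1; ring.
  rewrite hP1 hP2 big_split sumrB /= -!mulr_sumr (lemK v (fun t => f (inl t))).
  have hD : \sum_(w | P w) (1 : R) = \sum_t (e v t)%:R.
    transitivity (\sum_(w | P w) \sum_(t | (t \in val w) && (t != v)) (1 : R)).
      by apply: eq_bigr => w hw; rewrite one_other.
    by rewrite (lemK v (fun _ => 1)); apply: eq_bigr => t _; rewrite mulr1.
  have hR : \sum_(w : edge e | v \in sval w) (fv - f (inr w))
      = fv * \sum_(w | P w) (1 : R) - \sum_(w | P w) f (inr w).
    by rewrite sumrB mulr_sumr; congr (_ - _); apply: eq_bigr => w _; rewrite mulr1.
  rewrite hR hD.
  move: (\sum_t (e v t)%:R) (\sum_t (e v t)%:R * f (inl t)) (\sum_(w | P w) f (inr w)) => a b c.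
  clearbody fv; ring.
rewrite LapF_sum /= [X in _ + X]big1 ?addr0; last by move=> w _; rewrite mulr0.
rewrite /gF /=.
set L0 := LapF (adjS e) f (inr w0).
have hL0 : L0 = \sum_t (f (inr w0) - f (inl t)) * (t \in val w0)%:R := LS_inr w0.
transitivity (\sum_t (f (inr w0) - f (inl t)) * (t \in val w0)%:R
              + L0 * \sum_t (t \in val w0)%:R).
  by rewrite mulr_sumr -big_split; apply: eq_bigr => t _ /=; ring.
rewrite sum_ind card_edge (_ : \sum_t _ = L0); first by ring.
exact: esym hL0.
Qed.
End Graph.

Lemma LapF_ext (R : realFieldType) (V : finType) (adj : rel V) (h1 h2 : V -> R) z :
  (forall w, h1 w = h2 w) -> LapF adj h1 z = LapF adj h2 z.
Proof. by move=> H; apply: eq_bigr => w _; rewrite !H. Qed.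

Lemma LapF_scale (R : realFieldType) (V : finType) (adj : rel V) (h : V -> R) c z :
  LapF adj (fun w => h w * c) z = LapF adj h z * c.
Proof. by rewrite /LapF mulr_suml; apply: eq_bigr => w _; ring. Qed.

Section Final.
Variables (R : realFieldType) (T : finType) (e : rel T).
Hypotheses (e_sym : symmetric e) (e_irr : irreflexive e)
  (e_conn : forall x y : T, connect e x y).

Lemma conn_inl k l : connect e k l -> connect (adjS e) (inl k) (inl l).
Proof.
move=> /connectP [p hp ->]; elim: p k hp => [|k' p IH] k //= /andP [hk hp].
apply: connect_trans _ (IH _ hp).
pose w := mkE T e k k' hk.
have h1 : adjS e (inl k) (inr w) by rewrite /= !inE eqxx.
have h2 : adjS e (inr w) (inl k') by rewrite /= !inE eqxx orbT.
exact: connect_trans (connect1 h1) (connect1 h2).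
Qed.

Lemma conn_S x y : connect (adjS e) x y.
Proof.
have toinl z : exists k, connect (adjS e) z (inl k).
  case: z => [k|w]; first by exists k.
  have [k [l [_ _ hw]]] := edgeP T e e_irr w.
  by exists k; apply: connect1 => /=; rewrite hw !inE eqxx.
have [k hk] := toinl x; have [l hl] := toinl y.
apply: connect_trans hk _; rewrite (sym_connect_sym (adjS_sym T e)).
apply: (connect_trans hl). apply: conn_inl; exact: e_conn.
Qed.

Definition ind (z : svert e) (r : R) : R := if z is inr _ then r else 0.

Lemma mainE (a b : svert e) :
  let u := uvec R (svert e) a b in
  let x := u *m pinvmx (laplacian R (adjS e)) in
  resistance R (adjS e) a b = x 0 (enum_rank a) - x 0 (enum_rank b) /\
  resistance R (adjT e) a b =
    (x 0 (enum_rank a) + ind a (u 0 (enum_rank a))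
     - (x 0 (enum_rank b) + ind b (u 0 (enum_rank b)))) / 3.
Proof.
move=> u x.
have su := uvec_sub R (svert e) (adjS e) (adjS_sym T e) (adjS_irr T e) conn_S a b.
have hx : x *m laplacian R (adjS e) = u := mulmxKpV su.
split; first by rewrite (resE _ _ _ (adjS_sym T e) _ _ _ hx) uvecE.
pose y : 'rV[R]_#|Defs_svert__canonical__fintype_Finite e| :=
  \row_i ((x 0 i + ind (enum_val i) (u 0 i)) / 3).
have hy : y *m laplacian R (adjT e) = u.
  apply/rowP => j; rewrite -(enum_valK j).
  rewrite (lapE _ _ _ (adjT_sym T e e_sym) (adjT_irr T e e_irr)).
  set fx := fun w => x 0 (enum_rank w).
  rewrite (@LapF_ext _ _ _ _ (fun w => gF R T e fx w / 3)); last first.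
    move=> w; rewrite /y mxE enum_rankK /gF; congr (_ / 3).
    case: w => [v|w] //=; rewrite -/(fx (inr w)) ?addr0 //.
    by rewrite -hx (lapE _ _ _ (adjS_sym T e) (adjS_irr T e)).
  rewrite LapF_scale (ident _ _ _ e_sym e_irr) mulrC mulKf ?pnatr_eq0 //.
  by rewrite -(lapE _ _ _ (adjS_sym T e) (adjS_irr T e)) hx.
by rewrite (resE _ _ _ (adjT_sym T e e_sym) _ _ _ hy) uvecE /y !mxE !enum_rankK mulrBl.
Qed.
End Final.

Theorem proposition4p2 (R : realFieldType) (T : finType) (e : rel T)
    (e_sym : symmetric e) (e_irr : irreflexive e)
    (e_conn : forall x y : T, connect e x y) :
  [/\ (forall i j : T,
         resistance R (adjT e) (inl i) (inl j)
         = resistance R (adjS e) (inl i) (inl j) / 3),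
      (forall (i : edge e) (j : T),
         resistance R (adjT e) (inr i) (inl j)
         = resistance R (adjS e) (inr i) (inl j) / 3 + 1 / 3) &
      (forall i j : edge e, i != j ->
         resistance R (adjT e) (inr i) (inr j)
         = resistance R (adjS e) (inr i) (inr j) / 3 + 2 / 3)].
Proof.
split.
- move=> i j; have [-> ->] := mainE R T e e_sym e_irr e_conn (inl i) (inl j).
  by rewrite /ind !addr0 mulrBl.
- move=> i j; have [-> ->] := mainE R T e e_sym e_irr e_conn (inr i) (inl j).
  rewrite /ind /uvec !mxE !eqxx (inj_eq enum_rank_inj) /=.
  rewrite addr0 subr0; ring.
- move=> i j nij; have [-> ->] := mainE R T e e_sym e_irr e_conn (inr i) (inr j).
  rewrite /ind /uvec !mxE !eqxx (inj_eq enum_rank_inj) /=.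
  have h1 : (inr i == inr j :> svert e) = false.
    by apply/negbTE; apply: contra nij => /eqP [->].
  rewrite (inj_eq enum_rank_inj) h1 eq_sym h1 /=; ring.
Qed.
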